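(* Let $n\in\mathbb N$, $\alpha>0$, and let $Q\subset\mathbb R^n$ be a cube with sides parallel to the axes and side length $r=\ell(Q)\le1$; let $2Q$ be the concentric cube of side $2r$. Then there is a constant $C$ depending only on $n$ and $\alpha$ such that for every measurable $g:\mathbb R^n\to[0,\infty)$ and every $x\in Q$, $$\int_{2Q}\frac{g(y)}{|x-y|^{n-\alpha}}\,dy\le C\int_Q\frac{Mg(y)}{|x-y|^{n-\alpha}}\,dy.$$
   Context: $Mg(y)=\sup_{\rho>0}\frac{1}{|B(y,\rho)|}\int_{B(y,\rho)}|g|$ is the Hardy–Littlewood maximal function. *)

(* Defs.v *)
From HB Require Import structures.
From mathcomp Require Import all_boot all_order all_algebra.
From mathcomp Require Import all_classical all_reals all_analysis.
Set Implicit Arguments. Unset Strict Implicit. Unset Printing Implicit Defensive.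
Import Order.TTheory GRing.Theory Num.Theory.
Import numFieldNormedType.Exports.
Local Open Scope classical_set_scope.
Local Open Scope ring_scope.

(* Euclidean space R^(n.+1), built as the iterated product
   R * (R * ( ... * R)) with its product sigma-algebra (Borel^(n+1)). *)
Fixpoint Rspace (R : realType) (n : nat) : {d : measure_display & measurableType d} :=
  match n with
  | 0 => @existT measure_display (fun d => measurableType d) _ (measurableTypeR R)
  | n'.+1 => @existT measure_display (fun d => measurableType d) _
               ((measurableTypeR R) * projT2 (Rspace R n'))%type
  end.

Definition Rn (R : realType) (n : nat) := projT2 (Rspace R n).

Fixpoint rn_coord (R : realType) (n : nat) : Rn R n -> nat -> R :=
  match n return Rn R n -> nat -> R with
  | 0 => fun x _ => x
  | n'.+1 => fun x i => match i with
                        | 0 => x.1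
                        | i'.+1 => @rn_coord R n' x.2 i'
                        end
  end.

Fixpoint leb (R : realType) (n : nat) : set (Rn R n) -> \bar R :=
  match n return set (Rn R n) -> \bar R with
  | 0 => (@lebesgue_measure R)
  | n'.+1 => (@lebesgue_measure R \x @leb R n')%E
  end.

Definition eucl_dist (R : realType) (n : nat) (x y : Rn R n) : R :=
  Num.sqrt (\sum_(i < n.+1) (rn_coord x i - rn_coord y i) ^+ 2).

Definition eucl_ball (R : realType) (n : nat) (y : Rn R n) (rho : R) : set (Rn R n) :=
  [set z | eucl_dist y z < rho].

Definition axis_cube (R : realType) (n : nat) (c : Rn R n) (s : R) : set (Rn R n) :=
  [set z | forall i, (i <= n)%N -> `|rn_coord z i - rn_coord c i| <= s / 2].

Definition HLmax (R : realType) (n : nat) (g : Rn R n -> R) (y : Rn R n) : \bar R :=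
  ereal_sup [set (((fine (@leb R n (eucl_ball y rho)))^-1)%:E *
                 \int[@leb R n]_(z in eucl_ball y rho) (`|g z|)%:E)%E
            | rho in [set rho : R | 0 < rho]].

(* Main.v *)
Require Import Defs.
From HB Require Import structures.
From mathcomp Require Import all_boot all_order all_algebra.
From mathcomp Require Import all_classical all_reals all_analysis.
From mathcomp Require Import ring lra.
Import Order.TTheory GRing.Theory Num.Theory.
Import numFieldNormedType.Exports.
Local Open Scope classical_set_scope.
Local Open Scope ring_scope.

Section prodsf.
Local Open Scope ereal_scope.
Context d1 d2 (T1 : measurableType d1) (T2 : measurableType d2) (R : realType).
Variable m1 : {sigma_finite_measure set T1 -> \bar R}.
Variable m2 : {sigma_finite_measure set T2 -> \bar R}.

Lemma prod_sigma_finite : sigma_finite setT (m1 \x m2).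
Proof.
have /sigma_finiteP[F [TF ndF Foo]] := sigma_finiteT m1.
have /sigma_finiteP[G [TG ndG Goo]] := sigma_finiteT m2.
exists (fun n => F n `*` G n).
 rewrite -setXTT TF TG predeqE => -[x y]; split.
    move=> [/= [n _ Fnx] [k _ Gky]]; exists (maxn n k) => //; split.
    - by move: x Fnx; exact/subsetPset/ndF/leq_maxl.
    - by move: y Gky; exact/subsetPset/ndG/leq_maxr.
  by move=> [n _ []/= ? ?]; split; exists n.
move=> k; have [? ?] := Foo k; have [? ?] := Goo k.
split; first exact: measurableX.
by rewrite product_measure1E// lte_mul_pinfty// ge0_fin_numE.
Qed.

Definition prodS : {sigma_finite_measure set (T1 * T2)%type -> \bar R} :=
  HB.pack_for (sigma_finite_measure (T1 * T2)%type R) (m1 \x m2)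
    (Measure_isSigmaFinite.Build _ _ _ (m1 \x m2) prod_sigma_finite).
End prodsf.

Fixpoint lebS (R : realType) (n : nat) : {sigma_finite_measure set (Rn R n) -> \bar R} :=
  match n return {sigma_finite_measure set (Rn R n) -> \bar R} with
  | 0 => @lebesgue_measure R
  | n'.+1 => @prodS _ _ _ _ R (@lebesgue_measure R) (@lebS R n')
  end.

Lemma lebE (R : realType) n : @leb R n = @lebS R n.
Proof. elim: n => [//|n IH] /=. by rewrite IH. Qed.

Section nm.
Local Open Scope ereal_scope.
Context d (T : measurableType d) (R : realType) (mu : {measure set T -> \bar R}).
Lemma le_integral_nm (D : set T) (f1 f2 : T -> \bar R) :
  (forall x, D x -> 0 <= f1 x) -> (forall x, D x -> f1 x <= f2 x) ->
  \int[mu]_(x in D) f1 x <= \int[mu]_(x in D) f2 x.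
Proof.
move=> f10 f12.
have f20 : forall x, D x -> 0 <= f2 x by move=> x Dx; exact: le_trans (f10 x Dx) (f12 x Dx).
rewrite !ge0_integralE//.
apply: le_ereal_sup => _ [h hf <-]; exists h => // x.
apply: le_trans (hf x) _; rewrite /patch; case: ifP => // /[1!inE] Dx.
exact: f12.
Qed.
End nm.

Section rn.
Context {R : realType}.
Local Notation Rn := (Rn R).

Lemma coord_meas n i : measurable_fun setT (fun z : Rn n => rn_coord z i).
Proof.
elim: n i => [|n IH] i /=; first exact: measurable_id.
case: i => [|i]; first exact: measurable_fst.
exact: measurableT_comp (IH i) measurable_snd.
Qed.

Definition box n (a b : nat -> R) : set (Rn n) :=
  [set z | forall i, (i <= n)%N -> a i <= rn_coord z i <= b i].

Lemma box_S n a b : box n.+1 a b =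
  (`[a 0%N, b 0%N]%classic `*` box n (fun i => a i.+1) (fun i => b i.+1)).
Proof.
apply/seteqP; split => z /=.
  move=> H; split; first by rewrite /= in_itv /=; exact: (H 0%N).
  by move=> i ilen; exact: (H i.+1).
move=> [H0 H1] i; case: i => [|i] ilen /=; first by move: H0; rewrite /= in_itv.
exact: H1.
Qed.

Lemma box_meas n a b : measurable (box n a b).
Proof.
elim: n a b => [|n IH] a b.
  have -> : box 0 a b = `[a 0%N, b 0%N]%classic.
    apply/seteqP; split => z /=; first by move=> /(_ 0%N isT); rewrite in_itv.
    by rewrite in_itv => H [|]//.
  exact: measurable_itv.
rewrite box_S; apply: measurableX; [exact: measurable_itv| exact: IH].
Qed.

Lemma box_leb n a b : (forall i, (i <= n)%N -> a i <= b i) ->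
  lebS R n (box n a b) = (\prod_(i < n.+1) (b i - a i))%:E.
Proof.
elim: n a b => [|n IH] a b H.
  have -> : box 0 a b = `[a 0%N, b 0%N]%classic.
    apply/seteqP; split => z /=; first by move=> /(_ 0%N isT); rewrite in_itv.
    by rewrite in_itv => H' [|]//.
  rewrite big_ord1 /= lebesgue_measure_itv /= lte_fin.
  have := H 0%N isT; rewrite le_eqVlt => /orP[/eqP ->|->]; first by rewrite ltxx subrr.
  by rewrite EFinB.
rewrite box_S /= /prodS /= product_measure1E; last 2 first.
- exact: measurable_itv.
- exact: box_meas.
rewrite IH; last by move=> i ilen; exact: H.
rewrite [in RHS]big_ord_recl /= EFinM; congr (_ * _)%E.
rewrite lebesgue_measure_itv /= lte_fin.
have := H 0%N isT; rewrite le_eqVlt => /orP[/eqP ->|->]; first by rewrite ltxx subrr.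
by rewrite EFinB.
Qed.

Lemma dist_coord n (x y : Rn n) i : (i <= n)%N ->
  `|rn_coord x i - rn_coord y i| <= eucl_dist x y.
Proof.
move=> ilen; rewrite /eucl_dist -sqrtr_sqr ler_sqrt ?sumr_ge0// => [|j _]; last exact: sqr_ge0.
have ilt : (i < n.+1)%N by [].
rewrite (bigD1 (Ordinal ilt)) //= lerDl; apply: sumr_ge0 => j _; exact: sqr_ge0.
Qed.

Lemma dist_le n (x y : Rn n) t : 0 <= t ->
  (forall i, (i <= n)%N -> `|rn_coord x i - rn_coord y i| <= t) ->
  eucl_dist x y <= n.+1%:R * t.
Proof.
move=> t0 H.
rewrite /eucl_dist -(ger0_norm (mulr_ge0 (ler0n _ n.+1) t0)) -sqrtr_sqr ler_sqrt ?sqr_ge0//.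
apply: (@le_trans _ _ (\sum_(i < n.+1) t ^+ 2)).
  apply: ler_sum => i _; have := H i (ltn_ord i); rewrite ler_norml => /andP[h1 h2].
  nra.
rewrite sumr_const card_ord -mulr_natl.
have N1 : 1 <= n.+1%:R :> R by rewrite ler1n.
nra.
Qed.

Lemma dist_meas n (x : Rn n) : measurable_fun setT (eucl_dist x).
Proof.
rewrite /eucl_dist; apply: measurableT_comp.
  exact: measurable_realfun.continuous_measurable_fun (@sqrt_continuous R).
apply: measurable_sum => i.
apply: measurable_realfun.measurable_funX; apply: measurable_realfun.measurable_funB => //; exact: coord_meas.
Qed.

Lemma ball_meas n (x : Rn n) rho : measurable (eucl_ball x rho).
Proof.
have -> : eucl_ball x rho = setT `&` (eucl_dist x) @^-1` `]-oo, rho[.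
  rewrite setTI; apply/seteqP; split => z; rewrite /eucl_ball /preimage /= in_itv /=; by [].
apply: dist_meas => //; exact: measurable_itv.
Qed.


Lemma box_leb_cst n (a b : nat -> R) w : 0 <= w ->
  (forall i, (i <= n)%N -> b i - a i = w) ->
  lebS R n (box n a b) = (w ^+ n.+1)%:E.
Proof.
move=> w0 H; rewrite box_leb; last first.
  by move=> i /H => h; rewrite -subr_ge0 h.
congr EFin; rewrite (eq_bigr (fun=> w)); last by move=> i _; apply: H; exact: ltn_ord i.
by rewrite prodr_const card_ord.
Qed.

Lemma ball_leb n (z : Rn n) rho : 0 < rho ->
  exists v, lebS R n (eucl_ball z rho) = v%:E /\ 0 < v /\ v <= (2 * rho) ^+ n.+1.
Proof.
move=> rho0.
have N0 : 0 < n.+1%:R :> R by rewrite ltr0n.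
set lo := rho / (2 * n.+1%:R).
have lo0 : 0 < lo by rewrite divr_gt0 // mulr_gt0.
have sub1 : eucl_ball z rho `<=` box n (fun i => rn_coord z i - rho) (fun i => rn_coord z i + rho).
  move=> y /= yb i ilen.
  have := le_lt_trans (@dist_coord n z y i ilen) yb; rewrite ltr_norml => /andP[h1 h2].
  apply/andP; split; lra.
have sub2 : box n (fun i => rn_coord z i - lo) (fun i => rn_coord z i + lo) `<=` eucl_ball z rho.
  move=> y /= yb; rewrite /eucl_ball /=.
  have : eucl_dist z y <= n.+1%:R * lo.
    apply: dist_le; first exact: ltW.
    move=> i ilen; have /andP[h1 h2] := yb i ilen; rewrite ler_norml; apply/andP; split; lra.
  move=> h; apply: (le_lt_trans h).
  have -> : n.+1%:R * lo = rho / 2.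
    by rewrite /lo; field; rewrite -natr1 addrC in N0; rewrite (gt_eqF N0).
  lra.
have m1 : (lebS R n (eucl_ball z rho) <= lebS R n (box n (fun i => (rn_coord z i - rho)%R) (fun i => (rn_coord z i + rho)%R)))%E.
  exact: (le_measure (lebS R n) (mem_set (@ball_meas n z rho)) (mem_set (box_meas _ _ _)) sub1).
have m2 : (lebS R n (box n (fun i => (rn_coord z i - lo)%R) (fun i => (rn_coord z i + lo)%R)) <= lebS R n (eucl_ball z rho))%E.
  exact: (le_measure (lebS R n) (mem_set (box_meas _ _ _)) (mem_set (@ball_meas n z rho)) sub2).
rewrite (@box_leb_cst _ _ _ (2 * rho)) in m1; last 2 first.
- by rewrite mulr_ge0 // ltW.
- by move=> i _; ring.
rewrite (@box_leb_cst _ _ _ (2 * lo)) in m2; last 2 first.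
- by rewrite mulr_ge0 // ltW.
- by move=> i _; ring.
have fin : lebS R n (eucl_ball z rho) \is a fin_num.
  rewrite ge0_fin_numE ?measure_ge0 //; exact: le_lt_trans m1 (ltry _).
exists (fine (lebS R n (eucl_ball z rho))); split; first by rewrite fineK.
split.
  rewrite -lte_fin fineK //; apply: lt_le_trans m2; rewrite lte_fin.
  by apply: exprn_gt0; rewrite mulr_gt0.
by rewrite -lee_fin fineK.
Qed.


Lemma step_lemma (P : nat -> Prop) m : P 0%N -> ~ P m -> exists k, P k /\ ~ P k.+1.
Proof.
move=> P0 nPm; apply: contrapT => H; apply: nPm.
elim: m => [//|m IH]; apply: contrapT => nP; apply: H; exists m; split => //.
Qed.

Lemma powR_between (s t M b : R) : 0 < s -> s <= t -> t <= M * s -> 1 <= M ->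
  Num.min 1 (M `^ b) * s `^ b <= t `^ b /\ t `^ b <= Num.max 1 (M `^ b) * s `^ b.
Proof.
move=> s0 st tM M1.
have t0 : 0 < t by exact: lt_le_trans st.
have M0 : 0 <= M by exact: le_trans M1.
have Ms : (M * s) `^ b = M `^ b * s `^ b by rewrite powRM // ltW.
have sb0 : 0 <= s `^ b := powR_ge0 _ _.
have minle : Num.min 1 (M `^ b) * s `^ b <= s `^ b.
  by rewrite ler_piMl // ge_min lexx.
have minle2 : Num.min 1 (M `^ b) * s `^ b <= M `^ b * s `^ b.
  by rewrite ler_wpM2r // ge_min lexx orbT.
have maxge : s `^ b <= Num.max 1 (M `^ b) * s `^ b.
  by rewrite ler_peMl // le_max lexx.
have maxge2 : M `^ b * s `^ b <= Num.max 1 (M `^ b) * s `^ b.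
  by rewrite ler_wpM2r // le_max lexx orbT.
case: (leP 0 b) => b0.
  have mono : forall u v, 0 < u -> u <= v -> u `^ b <= v `^ b.
    by move=> u v u0 uv; apply: ge0_ler_powR => //; rewrite nnegrE ltW // (lt_le_trans u0 uv).
  split; first exact: le_trans minle (mono _ _ s0 st).
  by apply: le_trans maxge2; rewrite -Ms; apply: mono.
have anti : forall u v, 0 < u -> u <= v -> v `^ b <= u `^ b.
  move=> u v u0 uv.
  have v0 : 0 < v by exact: lt_le_trans uv.
  have nb : 0 <= - b by rewrite oppr_ge0 ltW.
  have vv : v \is Num.nneg by rewrite nnegrE ltW.
  have uu : u \is Num.nneg by rewrite nnegrE ltW.
  have h := ge0_ler_powR nb uu vv uv.
  have e : forall w, w `^ b = (w `^ (- b))^-1 by move=> w; rewrite -powRN opprK.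
  by rewrite !e lef_pV2 ?posrE ?powR_gt0.
split; last exact: le_trans (anti _ _ s0 st) maxge.
apply: le_trans minle2 _; rewrite -Ms; apply: anti => //.
Qed.

Lemma two_exp_ge k : k.+1%:R <= 2 ^+ k :> R.
Proof.
elim: k => [|k IH]; first by rewrite expr0.
rewrite exprS -natr1; have : 1 <= 2 ^+ k :> R by rewrite exprn_ege1 // ler1n.
lra.
Qed.


Definition sk (r : R) (k : nat) := r / 4 / 2 ^+ k.

Lemma sk_gt0 r k : 0 < r -> 0 < sk r k.
Proof. by move=> r0; rewrite /sk !divr_gt0 // exprn_gt0. Qed.

Lemma sk_S r k : sk r k.+1 = sk r k / 2.
Proof. by rewrite /sk exprSr invfM mulrA. Qed.

Lemma sk_le r k : 0 < r -> sk r k <= r / 4.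
Proof.
move=> r0; rewrite /sk ler_pdivrMr ?exprn_gt0 // ler_peMr ?exprn_ege1 // ?ler1n //.
by rewrite divr_ge0 // ltW.
Qed.

Lemma sk_dec r i d : 0 < r -> sk r (i + d) <= sk r i.
Proof.
move=> r0; elim: d => [|d IH]; first by rewrite addn0.
rewrite addnS sk_S; apply: le_trans IH; have := sk_gt0 r (i + d) r0; lra.
Qed.

Lemma sk_anti r i j : 0 < r -> (i < j)%N -> 2 * sk r j <= sk r i.
Proof.
move=> r0 ij; have -> : j = (i.+1 + (j - i.+1))%N by rewrite subnKC.
have := sk_dec r i.+1 (j - i.+1) r0; rewrite sk_S; lra.
Qed.

Lemma sk_small r t : 0 < r -> 0 < t -> exists k, sk r k < t.
Proof.
move=> r0 t0; exists (Num.truncn (r / 4 / t)).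
have h1 := truncnS_gt (r / 4 / t).
have h2 := two_exp_ge (Num.truncn (r / 4 / t)).
set m := Num.truncn _ in h1 h2 *.
rewrite /sk ltr_pdivrMr ?exprn_gt0 //.
rewrite ltr_pdivrMr // in h1.
have : 0 < t by [].
nra.
Qed.


Lemma cube_box n (c : Rn n) s :
  axis_cube c s = box n (fun i => rn_coord c i - s / 2) (fun i => rn_coord c i + s / 2).
Proof.
apply/seteqP; split => z; rewrite /axis_cube /box /= => h i ilen; have := h i ilen.
  by rewrite ler_norml => /andP[h1 h2]; apply/andP; split; lra.
by move=> /andP[h1 h2]; rewrite ler_norml; apply/andP; split; lra.
Qed.

Lemma cube_meas n (c : Rn n) s : measurable (axis_cube c s).
Proof. rewrite cube_box; exact: box_meas. Qed.

End rn.
Arguments box {R}.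
Arguments box_S {R}.
Arguments box_meas {R}.
Arguments box_leb {R}.
Arguments coord_meas {R}.
Arguments dist_coord {R n}.
Arguments dist_le {R n}.
Arguments dist_meas {R n}.
Arguments ball_meas {R n}.
Arguments box_leb_cst {R}.
Arguments ball_leb {R n}.
Arguments powR_between {R}.
Arguments sk {R}.
Arguments sk_gt0 {R}.
Arguments sk_S {R}.
Arguments sk_le {R}.
Arguments sk_dec {R}.
Arguments sk_anti {R}.
Arguments sk_small {R}.
Arguments cube_box {R n}.
Arguments cube_meas {R n}.

Section h. Context (R : realType). Local Notation Rn := (Rn R).
Lemma HLmax_ge0 n (g : Rn n -> R) z : (0 <= HLmax g z)%E.
Proof.
rewrite /HLmax lebE.
set F := fun rho => (((fine (lebS R n (eucl_ball z rho)))^-1)%:E *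
                 \int[lebS R n]_(w in eucl_ball z rho) (`|g w|)%:E)%E.
apply: (@le_trans _ _ (F 1)); last first.
  apply: ereal_sup_ubound. exists 1 => //; exact: ltr01.
apply: mule_ge0; last by apply: integral_ge0 => w _; rewrite lee_fin.
rewrite lee_fin invr_ge0 fine_ge0 //; exact: measure_ge0.
Qed.

End h.

From mathcomp Require Import measurable_realfun.

Theorem lemma5p1 (R : realType) (n : nat) (alpha : R) (halpha : 0 < alpha) :
  exists C : R,
    forall (c : Rn R n) (r : R), 0 < r -> r <= 1 ->
    forall g : Rn R n -> R, measurable_fun setT g -> (forall y, 0 <= g y) ->
    forall x : Rn R n, x \in axis_cube c r ->
    (\int[@leb R n]_(y in axis_cube c (2 * r))
        ((g y) * (eucl_dist x y) `^ (alpha - n.+1%:R))%:E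
     <= C%:E * \int[@leb R n]_(y in axis_cube c r)
        (HLmax g y * ((eucl_dist x y) `^ (alpha - n.+1%:R))%:E))%E.
Proof.
pose beta := alpha - n.+1%:R.
have N0 : 0 < n.+1%:R :> R by rewrite ltr0n.
have M1 : 1 <= 8 * n.+1%:R :> R.
  have : 1 <= n.+1%:R :> R by rewrite ler1n.
  lra.
pose P := (8 * n.+1%:R) `^ beta.
have P0 : 0 < P by rewrite powR_gt0 // mulr_gt0.
pose mn := Num.min 1 P. pose mx := Num.max 1 P.
have mn0 : 0 < mn by rewrite lt_min ltr01 P0.
pose L := mx / mn.
pose C := L * (44 * n.+1%:R) ^+ n.+1.
have C0 : 0 < C.
  apply: mulr_gt0; last by apply: exprn_gt0; rewrite mulr_gt0.
  by apply: divr_gt0 => //; rewrite lt_max ltr01.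
exists C => c r r0 r1 g mg g0 x xQ.
rewrite lebE.
pose s := sk r.
have s0 k : 0 < s k := sk_gt0 r k r0.
have sle k : s k <= r / 4 := sk_le r k r0.
pose K y := eucl_dist x y `^ beta.
pose Cx u := box n (fun i => rn_coord x i - u) (fun i => rn_coord x i + u).
pose Q2 := axis_cube c (2 * r).
pose Q := axis_cube c r.
pose A k := (Q2 `&` Cx (8 * s k)) `\` Cx (4 * s k).
pose E := box n (rn_coord x) (rn_coord x).
pose aS k i := if i == 0%N then
    (if rn_coord x 0 <= rn_coord c 0 then rn_coord x 0 + 3 * s k / 2 else rn_coord x 0 - 2 * s k)
  else (if rn_coord x i <= rn_coord c i then rn_coord x i else rn_coord x i - s k / 2).
pose bS k i := if i == 0%N then
    (if rn_coord x 0 <= rn_coord c 0 then rn_coord x 0 + 2 * s k else rn_coord x 0 - 3 * s k / 2)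
  else (if rn_coord x i <= rn_coord c i then rn_coord x i + s k / 2 else rn_coord x i).
pose S k := box n (aS k) (bS k).
pose rho k := 11 * n.+1%:R * s k.
have rho0 k : 0 < rho k by rewrite /rho !mulr_gt0.
pose V k := (2 * rho k) ^+ n.+1.
have V0 k : 0 < V k by rewrite exprn_gt0 // mulr_gt0.
pose m k := (((V k)^-1)%:E * \int[lebS R n]_(y in A k) (g y)%:E)%E.
pose Klo k := mn * s k `^ beta.
pose Khi k := mx * s k `^ beta.
pose f y := (g y * K y)%:E.
pose h k z := (((Klo k)%:E * m k) * (\1_(S k) z)%:E)%E.
have xc : forall i, (i <= n)%N -> `|rn_coord x i - rn_coord c i| <= r / 2.
  by move: xQ; rewrite inE.
have mg' : measurable_fun setT (fun y => (g y)%:E).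
  exact/measurable_realfun.measurable_EFinP.
have mfT : measurable_fun setT f.
  apply/measurable_realfun.measurable_EFinP.
  apply: measurable_realfun.measurable_funM => //.
  apply: measurableT_comp (measurable_powR _) _; exact: dist_meas.
have f0 y : (0 <= f y)%E by rewrite lee_fin mulr_ge0 // powR_ge0.
have mfD D : measurable_fun D f := measurable_funS measurableT (@subsetT _ D) mfT.
have mgD D : measurable_fun D (fun y => (g y)%:E) := measurable_funS measurableT (@subsetT _ D) mg'.
have mA k : measurable (A k).
  apply: measurableD; last exact: box_meas.
  apply: measurableI; [exact: cube_meas | exact: box_meas].
have mE : measurable E by exact: box_meas.
have mS k : measurable (S k) by exact: box_meas.
have m0 k : (0 <= m k)%E.
  apply: mule_ge0; first by rewrite lee_fin invr_ge0 ltW.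
  by apply: integral_ge0 => y _; rewrite lee_fin.
have Sfact k z : S k z ->
  [/\ (forall i, (i <= n)%N -> `|rn_coord x i - rn_coord z i| <= 2 * s k),
     3 * s k / 2 <= `|rn_coord x 0 - rn_coord z 0| & Q z].
  move=> Sz; have hs := s0 k; have hl := sle k.
  split.
  - move=> i ilen; have := Sz i ilen; rewrite /aS /bS.
    case: eqP => [->|_]; case: (leP (rn_coord x _) (rn_coord c _)) => hxc /andP[h1 h2];
      rewrite ler_norml; apply/andP; split; lra.
  - have := Sz 0%N isT; rewrite /aS /bS /=.
    case: (leP (rn_coord x 0) (rn_coord c 0)) => hxc /andP[h1 h2].
      rewrite ler0_norm; lra.
    rewrite ger0_norm; lra.
  - rewrite /Q cube_box /box /= => i ilen; have := Sz i ilen; have := xc i ilen.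
    rewrite ler_norml => /andP[c1 c2]; rewrite /aS /bS.
    case: eqP => [ie|_].
      subst i; case: (leP (rn_coord x 0) (rn_coord c 0)) => hxc /andP[h1 h2];
        apply/andP; split; lra.
    case: (leP (rn_coord x i) (rn_coord c i)) => hxc /andP[h1 h2]; apply/andP; split; lra.
have lebS_S k : lebS R n (S k) = ((s k / 2) ^+ n.+1)%:E.
  apply: box_leb_cst; first by rewrite divr_ge0 // ltW.
  move=> i _; rewrite /aS /bS.
  by case: eqP => _; case: (leP (rn_coord x _) (rn_coord c _)) => _; lra.
have distS k z : S k z -> s k <= eucl_dist x z <= (8 * n.+1%:R) * s k.
  move=> Sz; have [h1 h2 _] := Sfact k z Sz; have hs := s0 k.
  apply/andP; split.
    apply: (le_trans _ (dist_coord x z 0 (leq0n n))); lra.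
  apply: le_trans (dist_le x z (2 * s k) (ltac:(lra)) h1) _.
  nra.
have distA k y : A k y -> 4 * s k <= eucl_dist x y <= (8 * n.+1%:R) * s k.
  move=> [[_ Cy] nCy]; have hs := s0 k.
  apply/andP; split.
    rewrite leNgt; apply/negP => hlt; apply: nCy => i ilen.
    have := le_lt_trans (dist_coord x y i ilen) hlt; rewrite ltr_norml => /andP[h1 h2].
    apply/andP; split; lra.
  have hb : forall i, (i <= n)%N -> `|rn_coord x i - rn_coord y i| <= 8 * s k.
    by move=> i ilen; have /andP[h1 h2] := Cy i ilen; rewrite ler_norml; apply/andP; split; lra.
  apply: le_trans (dist_le x y (8 * s k) (ltac:(lra)) hb) _.
  nra.
have KS k z : S k z -> Klo k <= K z.
  move=> /distS /andP[h1 h2].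
  by have [] := powR_between (s k) (eucl_dist x z) (8 * n.+1%:R) beta (s0 k) h1 h2 M1.
have KA k y : A k y -> K y <= Khi k.
  move=> /distA /andP[h1 h2]; have hs := s0 k.
  have h1' : s k <= eucl_dist x y by lra.
  by have [] := powR_between (s k) (eucl_dist x y) (8 * n.+1%:R) beta (s0 k) h1' h2 M1.
have distSA k z y : S k z -> A k y -> eucl_dist z y < rho k.
  move=> Sz [[_ Cy] _]; have [h1 _ _] := Sfact k z Sz; have hs := s0 k.
  have hb : forall i, (i <= n)%N -> `|rn_coord z i - rn_coord y i| <= 10 * s k.
    move=> i ilen; have := h1 i ilen; have /andP[h2 h3] := Cy i ilen.
    rewrite !ler_norml => /andP[h4 h5]; apply/andP; split; lra.
  apply: le_lt_trans (dist_le z y (10 * s k) (ltac:(lra)) hb) _.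
  rewrite /rho; nra.
have cover : Q2 `<=` E `|` \bigcup_k A k.
  move=> y Q2y.
  have yc : forall i, (i <= n)%N -> `|rn_coord y i - rn_coord c i| <= r.
    by move=> i ilen; have := Q2y i ilen; rewrite !ler_norml => /andP[a1 a2]; apply/andP; split; lra.
  case: (leP (eucl_dist x y) 0) => hd.
    left => i ilen; have := le_trans (dist_coord x y i ilen) hd.
    by rewrite normr_le0 subr_eq0 => /eqP ->; rewrite lexx.
  right.
  have N8 : 0 < 8 * n.+1%:R :> R by lra.
  have [m1 hm1] := sk_small r (eucl_dist x y / (8 * n.+1%:R)) r0 (divr_gt0 hd N8).
  pose Pk k := Cx (8 * s k) y.
  have P0k : Pk 0%N.
    move=> i ilen; have := yc i ilen; have := xc i ilen; rewrite !ler_norml => /andP[a1 a2] /andP[b1 b2].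
    have -> : s 0%N = r / 4 by rewrite /s /sk expr0 divr1.
    apply/andP; split; lra.
  have nPm : ~ Pk m1.
    move=> Pm; have hs := s0 m1.
    have : eucl_dist x y <= n.+1%:R * (8 * s m1).
      apply: dist_le; first lra.
      move=> i ilen; have /andP[a1 a2] := Pm i ilen; rewrite ler_norml; apply/andP; split; lra.
    rewrite ltr_pdivlMr // in hm1.
    have e : n.+1%:R * (8 * s m1) = s m1 * (8 * n.+1%:R) by ring.
    rewrite e => hle; have := lt_le_trans hm1 hle; by rewrite ltxx.
  have [k [Pk1 nPk2]] := step_lemma Pk m1 P0k nPm.
  exists k => //; split; first by split.
  move=> C4; apply: nPk2; rewrite /Pk.
  have -> : 8 * s k.+1 = 4 * s k by rewrite /s sk_S; field.
  exact: C4.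
have disjEU : [disjoint E & \bigcup_k A k].
  rewrite disj_set2E; apply/eqP; rewrite -subset0 => y [Ey [k _ [_ nC]]].
  apply: nC => i ilen; have /andP[a1 a2] := Ey i ilen; have := s0 k.
  move=> hs; apply/andP; split; lra.
have Amono i j y : (i < j)%N -> A j y -> ~ A i y.
  move=> ij [[_ Cy] _] [_ nC]; apply: nC => i' ilen.
  have /andP[a1 a2] := Cy i' ilen; have := sk_anti r i j r0 ij; rewrite -/(s i) -/(s j) => hsa.
  apply/andP; split; lra.
have tA : trivIset setT A.
  move=> i j _ _ [y [Ai Aj]]; case: (ltngtP i j) => [ij|ij|-> //].
    by case: (Amono i j y ij Aj).
  by case: (Amono j i y ij Ai).
have Sdisj i j z : (i < j)%N -> S j z -> ~ S i z.
  move=> ij Sj Si; have [h1 _ _] := Sfact j z Sj; have [_ h2 _] := Sfact i z Si.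
  have := h1 0%N (leq0n n); have := sk_anti r i j r0 ij; rewrite -/(s i) -/(s j).
  have := s0 i; lra.
have HLge k z : S k z -> (m k <= HLmax g z)%E.
  move=> Sz; rewrite /HLmax lebE.
  set F := fun rho => (((fine (lebS R n (eucl_ball z rho)))^-1)%:E *
                 \int[lebS R n]_(w in eucl_ball z rho) (`|g w|)%:E)%E.
  apply: (@le_trans _ _ (F (rho k))); last first.
    apply: ereal_sup_ubound; exists (rho k) => //; exact: rho0.
  have [v [lv [v0 vV]]] := ball_leb z (rho k) (rho0 k).
  rewrite /F lv /=.
  apply: lee_pmul.
  - by rewrite lee_fin invr_ge0 ltW.
  - by apply: integral_ge0 => y _; rewrite lee_fin.
  - by rewrite lee_fin lef_pV2 ?posrE.
  - rewrite [leRHS](eq_integral (fun y => (g y)%:E)); last by move=> y _; rewrite ger0_norm.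
    apply: ge0_subset_integral => //; first exact: ball_meas.
    + by move=> y _; rewrite lee_fin.
    + by move=> y Ay; exact: distSA Sz Ay.
have Klo0 k : 0 <= Klo k by rewrite mulr_ge0 ?powR_ge0 // ltW.
have Khi0 k : 0 <= Khi k by rewrite mulr_ge0 ?powR_ge0 // le_max ler01.
have hge0 k z : (0 <= h k z)%E.
  apply: mule_ge0; first by apply: mule_ge0 => //; rewrite lee_fin.
  by rewrite lee_fin indicE ler0n.
have mind k : measurable_fun Q (fun z => (\1_(S k) z : R)%:E).
  by apply/measurable_EFinP; exact: measurable_indic.
have mh k : measurable_fun Q (h k).
  by rewrite /h; exact: (measurable_funeM ((Klo k)%:E * m k)%E (mind k)).
have intH k : (\int[lebS R n]_(z in Q) h k z = (Klo k)%:E * m k * ((s k / 2) ^+ n.+1)%:E)%E.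
  rewrite (ge0_integralZl _ (cube_meas c r) (mind k)); last 2 first.
  - by move=> z _; rewrite lee_fin indicE ler0n.
  - by rewrite mule_ge0 // lee_fin.
  rewrite integral_indic //; last exact: cube_meas.
  rewrite setIidl; first by rewrite -(lebS_S k).
  by move=> z Sz; have [_ _] := Sfact k z Sz.
have key k : Khi k * V k = C * (s k / 2) ^+ n.+1 * Klo k.
  rewrite /Khi /Klo /C /L /V /rho.
  have -> : 2 * (11 * n.+1%:R * s k) = 44 * n.+1%:R * (s k / 2) by field.
  rewrite exprMn; field; exact: lt0r_neq0.
have ak k : (\int[lebS R n]_(y in A k) f y <= C%:E * \int[lebS R n]_(z in Q) h k z)%E.
  rewrite intH.
  apply: (@le_trans _ _ (\int[lebS R n]_(y in A k) ((Khi k)%:E * (g y)%:E))%E).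
    apply: le_integral_nm => y Ay; first exact: f0.
    by rewrite /f -EFinM lee_fin mulrC ler_wpM2r //; exact: KA.
  rewrite (ge0_integralZl_EFin _ (mA k)) //; last by move=> y _; rewrite lee_fin.
  rewrite /m (muleC _ (((s k / 2) ^+ n.+1)%:E)) !muleA -!EFinM -key mulfK //.
  exact: lt0r_neq0.
have hsum K0 z : Q z -> ((\sum_(0 <= k < K0) h k z) <= HLmax g z * (K z)%:E)%E.
  move=> Qz; elim: K0 => [|K0 IH].
    rewrite big_geq //; apply: mule_ge0; [exact: HLmax_ge0 | by rewrite lee_fin powR_ge0].
  rewrite big_nat_recr //=.
  case: (pselect (S K0 z)) => SK.
    rewrite big_nat_cond big1 ?add0e; last first.
      move=> k /andP[/andP[_ kK] _]; rewrite /h indicE memNset ?mule0 //.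
      exact: Sdisj k K0 z kK SK.
    rewrite /h indicE (mem_set SK) /= mule1 muleC.
    apply: lee_pmul => //; first by rewrite lee_fin.
      exact: HLge.
    by rewrite lee_fin; exact: KS.
  by rewrite /h indicE (memNset SK) /= mule0 adde0.
have mU : measurable (\bigcup_k A k) by exact: bigcupT_measurable.
have E0 : lebS R n E = 0%E.
  rewrite (box_leb_cst n _ _ 0) ?expr0n //; move=> i _; exact: subrr.
have intE : (\int[lebS R n]_(y in E) f y = 0)%E.
  rewrite -(integral_abs_eq0 mE (mfD E) E0); apply: eq_integral => y _.
  by rewrite gee0_abs.
apply: (@le_trans _ _ (\int[lebS R n]_(y in E `|` \bigcup_k A k) f y)%E).
  apply: ge0_subset_integral => //.
  - exact: cube_meas.
  - exact: measurableU.
  - by move=> y _; exact: f0.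
rewrite (ge0_integral_setU _ mE mU (mfD _) (fun y _ => f0 y) disjEU) intE add0e.
rewrite (ge0_integral_bigcup _ mA (mfD _) (fun y _ => f0 y) tA).
apply: lime_le.
  by apply: is_cvg_nneseries => k _ _; apply: integral_ge0 => y _; exact: f0.
apply: nearW => K0.
apply: (@le_trans _ _ (\sum_(0 <= k < K0) (C%:E * \int[lebS R n]_(z in Q) h k z))%E).
  by apply: lee_sum => k _; exact: ak.
rewrite -ge0_sume_distrr; last by move=> k _; apply: integral_ge0 => z _; exact: hge0.
apply: lee_wpmul2l; first by rewrite lee_fin ltW.
rewrite -(ge0_integral_sum _ (cube_meas c r) mh (fun k z _ => hge0 k z)).
apply: le_integral_nm => z Qz; first by apply: sume_ge0 => k _; exact: hge0.
exact: hsum.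
Qed.
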